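(* Let $p\colon E\to B$ be an arc-covering with $E$ path-connected. Then every fiber $p^{-1}(b)$, $b\in B$ (with the subspace topology from $E$), is a $T_1$-space.
   Context: All maps are continuous. A map $p\colon E\to B$ is an arc-covering if (i) for every $e_0\in E$, every $t_0\in[0,1]$ and every map $f\colon [0,1]\to B$ with $f(t_0)=p(e_0)$ there is a map $g\colon[0,1]\to E$ with $p\circ g=f$ and $g(t_0)=e_0$, and (ii) such lifts are unique: if $g,h\colon[0,1]\to E$ satisfy $p\circ g=p\circ h$ and $g(t_0)=h(t_0)$ for some $t_0$, then $g=h$. *)

(* Defs.v *)
From HB Require Import structures.
From mathcomp Require Import all_boot all_order all_algebra.
From mathcomp Require Import all_classical all_reals all_analysis.
From mathcomp Require Import Rstruct Rstruct_topology.
Set Implicit Arguments. Unset Strict Implicit. Unset Printing Implicit Defensive.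
Import Order.TTheory GRing.Theory Num.Theory.
Local Open Scope classical_set_scope.
Local Open Scope ring_scope.

Definition unit_itv : set Rdefinitions.R := `[0%R, 1%R].
Definition I01 : topologicalType := set_type unit_itv.

Lemma unit_itv0 : (0%R : Rdefinitions.R) \in unit_itv.
Proof. by apply/mem_set; rewrite /unit_itv /= in_itv /= lexx ler01. Qed.
Lemma unit_itv1 : (1%R : Rdefinitions.R) \in unit_itv.
Proof. by apply/mem_set; rewrite /unit_itv /= in_itv /= lexx ler01. Qed.

Definition i0 : I01 := exist _ 0%R unit_itv0.
Definition i1 : I01 := exist _ 1%R unit_itv1.

Definition path_connected (E : topologicalType) : Prop :=
  forall x y : E, exists f : I01 -> E,
    continuous f /\ f i0 = x /\ f i1 = y.

Definition arc_covering (E B : topologicalType) (p : E -> B) : Prop :=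
  continuous p /\
  (forall (e0 : E) (t0 : I01) (f : I01 -> B),
      continuous f -> f t0 = p e0 ->
      exists g : I01 -> E, continuous g /\ p \o g = f /\ g t0 = e0) /\
  (forall (g h : I01 -> E) (t0 : I01),
      continuous g -> continuous h -> p \o g = p \o h -> g t0 = h t0 ->
      g = h).

Definition fiber (E B : Type) (p : E -> B) (b : B) : set E := p @^-1` [set b].

(* Main.v *)
Require Import Defs.
From mathcomp Require Import all_boot all_order all_algebra.
From mathcomp Require Import all_classical all_reals all_analysis.
From mathcomp Require Import Rstruct Rstruct_topology.
Import Order.TTheory GRing.Theory Num.Theory.
Local Open Scope classical_set_scope.
Local Open Scope ring_scope.

Theorem proposition2p4 (E B : topologicalType) (p : E -> B) :
  arc_covering p -> path_connected E ->
  forall b : B, @accessible_space (set_type (fiber p b)).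
Proof.
move=> [_ [_ uniq]] _ b x y xy.
apply: contrapT => nA.
have Hxy : forall N, nbhs (set_val x) N -> N (set_val y).
  move=> N; rewrite nbhsE => -[U [oU Ux] UN]; apply: UN.
  apply: contrapT => nUy; apply: nA.
  exists (set_val @^-1` U); split.
  - by exists U.
  - exact/mem_set.
  - by apply/mem_set.
pose g : I01 -> E := fun t => if val t == (1 : Rdefinitions.R) then set_val x else set_val y.
have cg : continuous g.
  move=> t; have [ht|ht] := eqVneq (val t) (1 : Rdefinitions.R).
    have gt : g t = set_val x by rewrite /g ht eqxx.
    move=> N; rewrite /= gt => Nx; suff : nbhs t (g @^-1` N) by [].
    apply: (@filterS _ (nbhs t) _ setT); last exact: filterT.
    move=> s _ /=; rewrite /g.
    by case: ifP => _; [exact: nbhs_singleton Nx | exact: Hxy].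
  have gt : g t = set_val y by rewrite /g (negbTE ht).
  have cv : continuous (set_val : I01 -> Rdefinitions.R).
    exact: (@initial_continuous I01 _ set_val).
  have : nbhs t [set s : I01 | set_val s != (1 : Rdefinitions.R)].
    apply: (cv t [set r : Rdefinitions.R | r != 1]).
    apply: open_nbhs_nbhs; split; first exact: open_neq.
    by rewrite /= set_valE.
  move=> Ht N; rewrite /= gt => Ny; suff : nbhs t (g @^-1` N) by [].
  apply: filterS Ht => s /= hs.
  by rewrite /g -set_valE (negbTE hs); exact: nbhs_singleton Ny.
pose h : I01 -> E := fun=> set_val y.
have ch : continuous h by exact: cst_continuous.
have px : p (set_val x) = b by have := set_valP x.
have py : p (set_val y) = b by have := set_valP y.
have pgh : p \o g = p \o h.
  by apply/funext => t; rewrite /= /g /h; case: ifP => _; rewrite ?px ?py.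
have gh0 : g i0 = h i0 by rewrite /g /h /= eq_sym oner_eq0.
have := uniq g h i0 cg ch pgh gh0 => /(congr1 (fun f => f i1)).
rewrite /g /h /= eqxx => exy.
by move/eqP: xy; apply; apply: val_inj; rewrite -!set_valE.
Qed.
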